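(* Let $\mathcal{C}$ be an $(s,\kappa)$-disjointness-expressing class of graphs. Then any proof labeling scheme for $\mathcal{C}$ has complexity $\Omega\!\left(\frac{n^{\kappa}}{s}\right)$. In particular, if $s$ is a constant and $\kappa=1$, the complexity is $\Omega(n)$.
   Context: All graphs are finite, simple, undirected, connected; vertices of an $n$-vertex graph have distinct identifiers in $\{1,\dots,\mathrm{poly}(n)\}$. A proof labeling scheme for a class $\mathcal{C}$ is a prover, assigning to each $G\in\mathcal{C}$ a certificate (binary word) to each vertex, together with a local verifier: each vertex $v$ outputs accept/reject depending only on its identifier and the certificates (and identifiers) in its closed neighborhood $N[v]$ (and possibly on the subgraph induced by $N[v]$). If $G\in\mathcal{C}$ all vertices accept the prover's certificates; if $G\notin\mathcal{C}$, for every assignment of certificates some vertex rejects. The complexity of the scheme is the maximum certificate length (bits) assigned to an $n$-vertex graph of $\mathcal{C}$, as a function of $n$. A class $\mathcal{C}$ is $(s,\kappa)$-disjointness-expressing if for some constant $\alpha>0$, for every positive integer $N$ and every $X\subseteq\{1,\dots,N\}$ one can define graphs $L(X)$ and $R(X)$, each containing a labelled set $S$ of special vertices, such that for all $A,B\subseteq\{1,\dots,N\}$: (i) the graph $g(L(A),R(B))$ obtained by identifying each vertex of $S$ in $L(A)$ with the corresponding vertex of $S$ in $R(B)$ is connected and has at most $\alpha N^{1/\kappa}$ vertices; (ii) the subgraph of $g(L(A),R(B))$ induced by the closed neighborhood $N[S]$ is independent of $A,B$ (for all $A,A',B,B'$ there is an isomorphism between these induced subgraphs that is the identity on $S$) and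 has at most $s$ vertices; (iii) $g(L(A),R(B))\in\mathcal{C}$ if and only if $A\cap B=\emptyset$. *)

(* Defs.v *)
From mathcomp Require Import all_boot.
From mathcomp Require Import finmap.
From Stdlib Require Import Reals.

Set Implicit Arguments.
Unset Strict Implicit.
Unset Printing Implicit Defensive.

Local Open Scope fset_scope.

Definition simple_graph (V : finType) (e : rel V) : Prop :=
  symmetric e /\ irreflexive e.

Definition connected_graph (V : finType) (e : rel V) : Prop :=
  simple_graph e /\ 0 < #|V| /\ (forall x y : V, connect e x y).

Definition graph_class := forall V : finType, rel V -> Prop.

Definition valid_ids (idb : nat -> nat) (V : finType) (idf : V -> nat) : Prop :=
  injective idf /\ (forall v, 1 <= idf v <= idb #|V|).

Definition cert := seq bool.

(* Local view of a vertex v: its identifier, its certificate, the set of *)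
(* (identifier, certificate) pairs of its neighbours, and the subgraph    *)
(* induced by N[v], given as the set of ordered pairs of identifiers of   *)
(* adjacent vertices of N[v] (identifiers are distinct, so this is the    *)
(* induced subgraph labelled by identifiers).                             *)
Definition view := (nat * cert * {fset (nat * cert)} * {fset (nat * nat)})%type.

Definition closed_nbhd (V : finType) (e : rel V) (v : V) : pred V :=
  fun u => (u == v) || e v u.

Definition local_view (V : finType) (e : rel V) (idf : V -> nat)
    (c : V -> cert) (v : V) : view :=
  (idf v, c v,
   [fset (idf u, c u) | u : V & e v u],
   [fset (idf x, idf y) | x : V, y : V &
      [&& closed_nbhd e v x, closed_nbhd e v y & e x y]]).

Definition verifier := view -> bool.

Definition proof_labeling_scheme (idb : nat -> nat) (C : graph_class)
    (f : nat -> nat) (D : verifier) : Prop :=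
  (forall (V : finType) (e : rel V) (idf : V -> nat),
      connected_graph e -> valid_ids idb idf -> C V e ->
      exists c : V -> cert,
        (forall v, size (c v) <= f #|V|) /\
        (forall v, D (local_view e idf c v)))
  /\
  (forall (V : finType) (e : rel V) (idf : V -> nat),
      connected_graph e -> valid_ids idb idf -> ~ C V e ->
      forall c : V -> cert, exists v, D (local_view e idf c v) = false).

(* L has vertices VL, edges eL, special vertices sL : 'I_k -> VL;       *)
(* R similarly.  The glued graph has vertices VL + (VR minus special),  *)
(* special vertex i of R being identified with special vertex i of L.   *)
Section Glue.
Variables (k : nat) (VL VR : finType) (eL : rel VL) (eR : rel VR)
  (sL : 'I_k -> VL) (sR : 'I_k -> VR).

Definition glue_vertex : finType := (VL + {r : VR | r \notin codom sR})%type.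

Definition glue_corrR (r : VR) (x : glue_vertex) : bool :=
  match x with
  | inl l => [exists i, (sR i == r) && (sL i == l)]
  | inr r' => val r' == r
  end.

Definition glue_edge : rel glue_vertex :=
  fun x y =>
    [exists a : VL, exists b : VL, [&& x == inl a, y == inl b & eL a b]]
    || [exists a : VR, exists b : VR, [&& glue_corrR a x, glue_corrR b y & eR a b]].

Definition glue_special (i : 'I_k) : glue_vertex := inl (sL i).


Definition glue_NS : {set glue_vertex} :=
  [set x | [exists i, (x == glue_special i) || glue_edge (glue_special i) x]].
End Glue.
Arguments glue_vertex {k} VL {VR} sR.
Arguments glue_corrR {k VL VR} sL sR r x.
Arguments glue_edge {k VL VR} eL eR sL sR x y.
Arguments glue_special {k VL VR} sL sR i.
Arguments glue_NS {k VL VR} eL eR sL sR.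

(* Subsets of {1,...,N} are represented by {set 'I_N}.                   *)
Definition disjointness_expressing (s : nat) (kappa : R) (C : graph_class) : Prop :=
  exists alpha : R, (0 < alpha)%R /\
  forall N : nat, 0 < N ->
  exists (k : nat)
         (VL VR : {set 'I_N} -> finType)
         (eL : forall X, rel (VL X)) (eR : forall X, rel (VR X))
         (sL : forall X, 'I_k -> VL X) (sR : forall X, 'I_k -> VR X),
    (forall X, simple_graph (eL X) /\ simple_graph (eR X)
               /\ injective (sL X) /\ injective (sR X)) /\
    (forall A B : {set 'I_N},
        connected_graph (glue_edge (eL A) (eR B) (sL A) (sR B)) /\
        (INR #|glue_vertex (VL A) (sR B)| <= alpha * Rpower (INR N) (/ kappa))%R) /\
    (* (ii) the subgraph induced by N[S] does not depend on A, B, and has *)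
    (*      at most s vertices *)
    (forall A B A' B' : {set 'I_N},
        exists phi : glue_vertex (VL A) (sR B) -> glue_vertex (VL A') (sR B'),
          {in glue_NS (eL A) (eR B) (sL A) (sR B) &, injective phi} /\
          phi @: glue_NS (eL A) (eR B) (sL A) (sR B)
            = glue_NS (eL A') (eR B') (sL A') (sR B') /\
          (forall i, phi (glue_special (sL A) (sR B) i)
                     = glue_special (sL A') (sR B') i) /\
          {in glue_NS (eL A) (eR B) (sL A) (sR B) &, forall x y,
             glue_edge (eL A') (eR B') (sL A') (sR B') (phi x) (phi y)
             = glue_edge (eL A) (eR B) (sL A) (sR B) x y}) /\
    (forall A B : {set 'I_N},
        #|glue_NS (eL A) (eR B) (sL A) (sR B)| <= s) /\
    (forall A B : {set 'I_N},
        C _ (glue_edge (eL A) (eR B) (sL A) (sR B)) <-> A :&: B = set0).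

(* Main.v *)
Require Import Defs.
From mathcomp Require Import all_boot.
From mathcomp Require Import finmap.
From Stdlib Require Import Reals.
Set Implicit Arguments. Unset Strict Implicit. Unset Printing Implicit Defensive.
Local Open Scope fset_scope.

Lemma view_transfer (V1 V2 : finType) (e1 : rel V1) (e2 : rel V2)
  (id1 : V1 -> nat) (id2 : V2 -> nat) (c1 : V1 -> cert) (c2 : V2 -> cert)
  (v1 : V1) (v2 : V2) (h : V1 -> V2) :
  h v1 = v2 ->
  (forall x, closed_nbhd e1 v1 x -> id2 (h x) = id1 x /\ c2 (h x) = c1 x) ->
  (forall x y, closed_nbhd e1 v1 x -> closed_nbhd e1 v1 y -> e2 (h x) (h y) = e1 x y) ->
  (forall y, closed_nbhd e2 v2 y -> exists2 x, closed_nbhd e1 v1 x & h x = y) ->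
  local_view e1 id1 c1 v1 = local_view e2 id2 c2 v2.
Proof.
move=> hv hdat hedge hsurj.
have nv1 : closed_nbhd e1 v1 v1 by rewrite /closed_nbhd eqxx.
have hN : forall x, closed_nbhd e1 v1 x -> closed_nbhd e2 v2 (h x).
  move=> x Nx; rewrite /closed_nbhd -hv hedge //.
  by move: Nx; rewrite /closed_nbhd => /orP [/eqP ->|->]; rewrite ?eqxx ?orbT.
have hE : forall x, closed_nbhd e1 v1 x -> e2 v2 (h x) = e1 v1 x.
  by move=> x Nx; rewrite -hv hedge.
rewrite /local_view -hv; have [-> ->] := hdat v1 nv1; rewrite hv.
congr (_, _, _, _).
- apply/fsetP => z; apply/imfsetP/imfsetP => -[x /= xin ->].
    rewrite !inE /= in xin.
    have Nx : closed_nbhd e1 v1 x by rewrite /closed_nbhd xin orbT.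
    exists (h x); first by rewrite !inE /= hE.
    by have [-> ->] := hdat x Nx.
  rewrite !inE /= in xin.
  have Nx : closed_nbhd e2 v2 x by rewrite /closed_nbhd xin orbT.
  have [x' Nx' hx] := hsurj x Nx.
  exists x'; first by rewrite !inE /= -(hE x' Nx') hx.
  by rewrite -hx; have [-> ->] := hdat x' Nx'.
- apply/fsetP => z; apply/imfset2P/imfset2P => -[x /= _ [y /= ]]; rewrite !inE /= => /and3P [Nx Ny exy] ->.
    exists (h x) => //; exists (h y); first by rewrite !inE /= !hN // hedge.
    by have [-> _] := hdat x Nx; have [-> _] := hdat y Ny.
  have [x' Nx' hx] := hsurj x Nx; have [y' Ny' hy] := hsurj y Ny.
  exists x' => //; exists y'; first by rewrite !inE /= Nx' Ny' -hedge // hx hy.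
  by rewrite -hx -hy; have [-> _] := hdat x' Nx'; have [-> _] := hdat y' Ny'.
Qed.

Section GlueLemmas.
Variables (k : nat) (VL VR : finType) (eL : rel VL) (eR : rel VR)
  (sL : 'I_k -> VL) (sR : 'I_k -> VR).
Notation E := (glue_edge eL eR sL sR).

Lemma glue_ll a b : E (inl a) (inl b) =
  eL a b || [exists i, exists j, [&& sL i == a, sL j == b & eR (sR i) (sR j)]].
Proof.
rewrite /glue_edge; congr orb.
  apply/existsP/idP => [[a' /existsP [b' /and3P [/eqP [->] /eqP [->] ->]]] //|ab].
  by exists a; apply/existsP; exists b; rewrite !eqxx ab.
apply/existsP/existsP => [[a' /existsP [b' /and3P [/existsP [i /andP [/eqP ei /eqP ai]]
   /existsP [j /andP [/eqP ej /eqP bj]] e]]]|[i /existsP [j /and3P [ai bj e]]]].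
  by exists i; apply/existsP; exists j; rewrite ai bj ei ej !eqxx e.
exists (sR i); apply/existsP; exists (sR j); rewrite e andbT /glue_corrR.
by apply/andP; split; apply/existsP; [exists i | exists j]; rewrite eqxx.
Qed.

Lemma glue_lr a r : E (inl a) (inr r) = [exists i, (sL i == a) && eR (sR i) (val r)].
Proof.
rewrite /glue_edge /=.
have -> : [exists a0 : VL, exists b : VL, [&& (inl a : glue_vertex VL sR) == inl a0, (inr r : glue_vertex VL sR) == inl b & eL a0 b]] = false.
  by apply: negbTE; apply/negP => /existsP [a0 /existsP [b /and3P [_ /eqP []]]].
apply/existsP/existsP => [[a' /existsP [b' /and3P [/existsP [i /andP [/eqP ei /eqP ai]] /eqP rb e]]]|[i /andP [ai e]]].
  by exists i; rewrite ai ei rb e eqxx.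
exists (sR i); apply/existsP; exists (val r); rewrite e eqxx andbT andbT.
by apply/existsP; exists i; rewrite eqxx ai.
Qed.

Lemma glue_rl a r : E (inr r) (inl a) = [exists i, (sL i == a) && eR (val r) (sR i)].
Proof.
rewrite /glue_edge /=.
have -> : [exists a0 : VL, exists b : VL, [&& (inr r : glue_vertex VL sR) == inl a0, (inl a : glue_vertex VL sR) == inl b & eL a0 b]] = false.
  by apply: negbTE; apply/negP => /existsP [a0 /existsP [b /and3P [/eqP []]]].
apply/existsP/existsP => [[a' /existsP [b' /and3P [/eqP rb /existsP [i /andP [/eqP ei /eqP ai]] e]]]|[i /andP [ai e]]].
  by exists i; rewrite ai ei rb e eqxx.
exists (val r); apply/existsP; exists (sR i); rewrite e eqxx andbT /=.
by apply/existsP; exists i; rewrite eqxx ai.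
Qed.

Lemma glue_rr r r' : E (inr r) (inr r') = eR (val r) (val r').
Proof.
rewrite /glue_edge /=.
have -> : [exists a0 : VL, exists b : VL, [&& (inr r : glue_vertex VL sR) == inl a0, (inr r' : glue_vertex VL sR) == inl b & eL a0 b]] = false.
  by apply: negbTE; apply/negP => /existsP [a0 /existsP [b /and3P [/eqP []]]].
apply/existsP/idP => [[a' /existsP [b' /and3P [/eqP <- /eqP <- e]]] //|e].
by exists (val r); apply/existsP; exists (val r'); rewrite !eqxx e.
Qed.

Lemma glue_sym : symmetric eL -> symmetric eR -> symmetric E.
Proof.
move=> sl sr [a|r] [b|r'].
- rewrite !glue_ll sl; congr orb.
  apply/existsP/existsP => -[i /existsP [j /and3P [ai bj e]]];
  by exists j; apply/existsP; exists i; rewrite ai bj sr e.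
- by rewrite glue_lr glue_rl; apply: eq_existsb => i; rewrite sr.
- by rewrite glue_lr glue_rl; apply: eq_existsb => i; rewrite sr.
- by rewrite !glue_rr sr.
Qed.

Lemma glue_special_inr : injective sL -> forall i r,
  E (glue_special sL sR i) (inr r) = eR (sR i) (val r).
Proof.
move=> inj i r; rewrite glue_lr; apply/existsP/idP => [[j /andP [/eqP /inj -> //]]|e].
by exists i; rewrite eqxx e.
Qed.

Lemma glue_inl_inr a r : injective sL ->
  E (inl a) (inr r) = [exists i, (sL i == a) && E (glue_special sL sR i) (inr r)].
Proof.
move=> inj; rewrite glue_lr; apply: eq_existsb => i; by rewrite glue_special_inr.
Qed.

End GlueLemmas.

From Stdlib Require Import IndefiniteDescription Classical.

Definition isr (T1 T2 : Type) (x : T1 + T2) : bool := if x is inr _ then true else false.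

Lemma special_in_NS (k : nat) (VL VR : finType) (eL : rel VL) (eR : rel VR)
  (sL : 'I_k -> VL) (sR : 'I_k -> VR) i :
  glue_special sL sR i \in glue_NS eL eR sL sR.
Proof. by rewrite inE; apply/existsP; exists i; rewrite eqxx. Qed.

Lemma nbr_special_in_NS (k : nat) (VL VR : finType) (eL : rel VL) (eR : rel VR)
  (sL : 'I_k -> VL) (sR : 'I_k -> VR) i y :
  glue_edge eL eR sL sR (glue_special sL sR i) y -> y \in glue_NS eL eR sL sR.
Proof. by move=> e; rewrite inE; apply/existsP; exists i; rewrite e orbT. Qed.

Local Close Scope fset_scope.
Unset Implicit Arguments.
Section Fool.
Variables (C : graph_class) (idb : nat -> nat) (Hidb : forall n, n <= idb n)
  (f : nat -> nat) (D : verifier) (Hpls : proof_labeling_scheme idb C f D).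
Variables (N k : nat) (VL VR : {set 'I_N} -> finType)
  (eL : forall X, rel (VL X)) (eR : forall X, rel (VR X))
  (sL : forall X, 'I_k -> VL X) (sR : forall X, 'I_k -> VR X).
Hypothesis Hsimp : forall X, simple_graph (eL X) /\ simple_graph (eR X)
               /\ injective (sL X) /\ injective (sR X).
Hypothesis Hconn : forall A B : {set 'I_N},
        connected_graph (glue_edge (eL A) (eR B) (sL A) (sR B)).
Hypothesis Hiso : forall A B A' B' : {set 'I_N},
        exists phi : glue_vertex (VL A) (sR B) -> glue_vertex (VL A') (sR B'),
          {in glue_NS (eL A) (eR B) (sL A) (sR B) &, injective phi} /\
          phi @: glue_NS (eL A) (eR B) (sL A) (sR B)
            = glue_NS (eL A') (eR B') (sL A') (sR B') /\
          (forall i, phi (glue_special (sL A) (sR B) i)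
                     = glue_special (sL A') (sR B') i) /\
          {in glue_NS (eL A) (eR B) (sL A) (sR B) &, forall x y,
             glue_edge (eL A') (eR B') (sL A') (sR B') (phi x) (phi y)
             = glue_edge (eL A) (eR B) (sL A) (sR B) x y}.
Hypothesis HC : forall A B : {set 'I_N},
        C _ (glue_edge (eL A) (eR B) (sL A) (sR B)) <-> A :&: B = set0.

Notation GV A B := (glue_vertex (VL A) (sR B)).
Notation GE A B := (glue_edge (eL A) (eR B) (sL A) (sR B)).
Notation NS A B := (glue_NS (eL A) (eR B) (sL A) (sR B)).
Notation sp A B i := (glue_special (sL A) (sR B) i).

Definition gid A B (x : GV A B) : nat :=
  match x with inl l => (enum_rank l).+1 | inr r => #|VL A| + (enum_rank r).+1 end.

Lemma card_GV A B : #|GV A B| = #|VL A| + #|{: {r : VR B | r \notin codom (sR B)}}|.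
Proof. by rewrite card_sum. Qed.

Lemma gid_le A B (x : GV A B) : gid A B x <= #|GV A B|.
Proof.
rewrite card_GV; case: x => [l|r] /=.
  by apply: leq_trans (ltn_ord (enum_rank l)) (leq_addr _ _).
by rewrite leq_add2l; apply: ltn_ord.
Qed.

Lemma gid_valid A B : valid_ids idb (gid A B).
Proof.
split; last first.
  move=> x; apply/andP; split; last exact: leq_trans (gid_le A B x) (Hidb _).
  by case: x => [l|r] /=; rewrite ?addnS.
move=> [l|r] [l'|r'] /=.
- by move=> [] /val_inj /enum_rank_inj ->.
- move=> E; have := ltn_ord (enum_rank l); move: E; rewrite addnS => -[->].
  by rewrite ltnNge leq_addr.
- move=> E; have := ltn_ord (enum_rank l'); move: E; rewrite addnS => -[<-].
  by rewrite ltnNge leq_addr.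
- by move=> /addnI [] /val_inj /enum_rank_inj ->.
Qed.

Lemma Hcomp A : exists c : GV A (~: A) -> cert,
   (forall v, size (c v) <= f #|GV A (~: A)|) /\ (forall v, D (local_view (GE A (~: A)) (gid A (~: A)) c v)).
Proof.
apply: Hpls.1; [exact: Hconn | exact: gid_valid | apply/HC].
by rewrite setICr.
Qed.

Definition cA A : GV A (~: A) -> cert := proj1_sig (constructive_indefinite_description _ (Hcomp A)).
Lemma cA_spec A : (forall v, size (cA A v) <= f #|GV A (~: A)|) /\
   (forall v, D (local_view (GE A (~: A)) (gid A (~: A)) (cA A) v)).
Proof. exact: (proj2_sig (constructive_indefinite_description _ (Hcomp A))). Qed.

Definition phiA A : GV set0 set0 -> GV A (~: A) :=
  proj1_sig (constructive_indefinite_description _ (Hiso set0 set0 A (~: A))).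
Lemma phiA_spec A :
          {in NS set0 set0 &, injective (phiA A)} /\
          (phiA A) @: NS set0 set0 = NS A (~: A) /\
          (forall i, phiA A (sp set0 set0 i) = sp A (~: A) i) /\
          {in NS set0 set0 &, forall x y, GE A (~: A) (phiA A x) (phiA A y) = GE set0 set0 x y}.
Proof. exact: (proj2_sig (constructive_indefinite_description _ (Hiso set0 set0 A (~: A)))). Qed.

Definition bNS := {x : GV set0 set0 | x \in NS set0 set0}.

Definition spb i : bNS := exist _ (sp set0 set0 i) (special_in_NS _ _ _ _ i).

Definition key (W F : nat) (A : {set 'I_N}) :
   'I_W.+1 * {ffun bNS -> bool * 'I_W.+1 * {bseq F of bool}} :=
  (inord #|VL A|, [ffun b : bNS => (isr (phiA A (val b)), inord (gid A (~: A) (phiA A (val b))),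
                                    insub_bseq F (cA A (phiA A (val b))))]).


Lemma sym_GE A B : symmetric (GE A B).
Proof.
apply: glue_sym; [exact: (Hsimp A).1.1 | exact: (Hsimp B).2.1.1].
Qed.

Lemma injL A : injective (sL A).
Proof. exact: (Hsimp A).2.2.1. Qed.

Lemma Hss A B A' B' i j :
  GE A B (sp A B i) (sp A B j) = GE A' B' (sp A' B' i) (sp A' B' j).
Proof.
have [phi [_ [_ [P3 P4]]]] := Hiso A B A' B'.
by rewrite -!P3 P4 // special_in_NS.
Qed.

Lemma inl_edge_B A B B' a b : GE A B (inl a) (inl b) = GE A B' (inl a) (inl b).
Proof.
case: (pickP (fun i => sL A i == a)) => [i /eqP ai|na];
  case: (pickP (fun j => sL A j == b)) => [j /eqP bj|nb].
- by have := Hss A B A B' i j; rewrite /glue_special ai bj.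
- rewrite !glue_ll; congr orb; apply/idP/idP => /existsP [i' /existsP [j' /and3P [_ bj' _]]];
  by have := nb j'; rewrite bj'.
- rewrite !glue_ll; congr orb; apply/idP/idP => /existsP [i' /existsP [j' /and3P [ai' _ _]]];
  by have := na i'; rewrite ai'.
- rewrite !glue_ll; congr orb; apply/idP/idP => /existsP [i' /existsP [j' /and3P [ai' _ _]]];
  by have := na i'; rewrite ai'.
Qed.

Lemma special_inr_A A A' B i r : GE A B (sp A B i) (inr r) = GE A' B (sp A' B i) (inr r).
Proof. by rewrite !glue_special_inr //; exact: injL. Qed.

Lemma inr_inr_A A A' B r r' : GE A B (inr r) (inr r') = GE A' B (inr r) (inr r').
Proof. by rewrite !glue_rr. Qed.

Lemma inNS A (b : bNS) : phiA A (val b) \in NS A (~: A).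
Proof. by have [_ [<- _]] := phiA_spec A; apply: imset_f; exact: valP b. Qed.

Lemma surjA A y : y \in NS A (~: A) -> exists b : bNS, phiA A (val b) = y.
Proof.
have [_ [P2 _]] := phiA_spec A; rewrite -P2 => /imsetP [x xin ->].
by exists (exist _ x xin).
Qed.

Lemma injA A (b b' : bNS) : phiA A (val b) = phiA A (val b') -> b = b'.
Proof.
have [P1 _] := phiA_spec A; move=> /P1 h; apply: val_inj; apply: h; exact: valP.
Qed.

Lemma spA A i : phiA A (val (spb i)) = sp A (~: A) i.
Proof. by have [_ [_ [P3 _]]] := phiA_spec A; exact: P3. Qed.

Lemma transport A A' (b1 b2 : bNS) :
  GE A (~: A) (phiA A (val b1)) (phiA A (val b2)) = GE A' (~: A') (phiA A' (val b1)) (phiA A' (val b2)).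
Proof.
have [_ [_ [_ P4]]] := phiA_spec A; have [_ [_ [_ P4']]] := phiA_spec A'.
by rewrite P4 ?P4' //; exact: valP.
Qed.

Lemma inl_eqE (T1 T2 : eqType) (a b : T1) : (inl a == inl b :> T1 + T2) = (a == b).
Proof. by []. Qed.
Lemma inr_eqE (T1 T2 : eqType) (a b : T2) : (inr a == inr b :> T1 + T2) = (a == b).
Proof. by []. Qed.
Lemma inl_inr_eq (T1 T2 : eqType) (a : T1) (b : T2) : (inl a == inr b :> T1 + T2) = false.
Proof. by []. Qed.
Lemma inr_inl_eq (T1 T2 : eqType) (a : T1) (b : T2) : (inr b == inl a :> T1 + T2) = false.
Proof. by []. Qed.


Section Key.
Variables (W F : nat).
Hypothesis HW : forall A, #|GV A (~: A)| <= W.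
Hypothesis HF : forall A, f #|GV A (~: A)| <= F.

Lemma key_facts A A' : key W F A = key W F A' ->
  #|VL A| = #|VL A'| /\ forall b : bNS,
   [/\ isr (phiA A (val b)) = isr (phiA A' (val b)),
       gid A (~: A) (phiA A (val b)) = gid A' (~: A') (phiA A' (val b)) &
       cA A (phiA A (val b)) = cA A' (phiA A' (val b))].
Proof.
have cardL X : #|VL X| < W.+1.
  by rewrite ltnS (leq_trans _ (HW X)) // card_GV leq_addr.
have gidW X x : gid X (~: X) x < W.+1 by rewrite ltnS (leq_trans (gid_le _ _ x)).
have cW X x : size (cA X x) <= F by apply: leq_trans ((cA_spec X).1 x) (HF X).
case=> /(congr1 (@nat_of_ord _)) H1 /ffunP H2; rewrite !inordK // in H1; split => // b.
have := H2 b; rewrite !ffunE => -[e1 /(congr1 (@nat_of_ord _)) e2 /(congr1 val) e3].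
rewrite !inordK // in e2; rewrite /insub_bseq !insubdK in e3; first by split.
  all: by rewrite unfold_in /= cW.
Qed.
End Key.

Section Mixed.
Variables (A A' : {set 'I_N}).
Hypothesis HK1 : #|VL A| = #|VL A'|.
Hypothesis HK2 : forall b : bNS,
   [/\ isr (phiA A (val b)) = isr (phiA A' (val b)),
       gid A (~: A) (phiA A (val b)) = gid A' (~: A') (phiA A' (val b)) &
       cA A (phiA A (val b)) = cA A' (phiA A' (val b))].

Definition cM (x : GV A (~: A')) : cert :=
  match x with inl l => cA A (inl l) | inr r => cA A' (inr r) end.

Definition hL (l : VL A) (x : GV A (~: A')) : GV A (~: A) :=
  match x with
  | inl a => inl a
  | inr r => if [pick b : bNS | phiA A' (val b) == inr r] is Some b then phiA A (val b) else inl l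
  end.

Lemma inrL l r : (inr r : GV A' (~: A')) \in NS A' (~: A') ->
  exists b : bNS, [/\ phiA A' (val b) = inr r, hL l (inr r) = phiA A (val b) &
                    exists r0, phiA A (val b) = inr r0].
Proof.
move=> /surjA [b0 hb0]; rewrite /hL; case: pickP => [b /eqP hb|none]; last first.
  by have := none b0; rewrite hb0 eqxx.
exists b; split => //.
have [e1 _ _] := HK2 b; move: e1; rewrite hb.
by case: (phiA A (val b)) => // r0 _; exists r0.
Qed.

Lemma nbrL_NS l r : GE A (~: A') (inl l) (inr r) -> (inr r : GV A' (~: A')) \in NS A' (~: A').
Proof.
rewrite glue_inl_inr; last exact: injL.
case/existsP => i /andP [_ e]; apply: (@nbr_special_in_NS _ _ _ _ _ _ _ i).
by rewrite -(special_inr_A A).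
Qed.

Lemma edge_lr l a r : (inr r : GV A' (~: A')) \in NS A' (~: A') ->
  GE A (~: A) (inl a) (hL l (inr r)) = GE A (~: A') (inl a) (inr r).
Proof.
move=> /(inrL l) [b [hb -> [r0 hr0]]]; rewrite hr0.
rewrite !glue_inl_inr; try exact: injL.
apply: eq_existsb => i; congr andb.
rewrite [RHS](special_inr_A A A') -hr0 -hb -(spA A) -(spA A').
by rewrite (transport A A').
Qed.

Lemma viewL l : local_view (GE A (~: A')) (gid A (~: A')) cM (inl l)
              = local_view (GE A (~: A)) (gid A (~: A)) (cA A) (inl l).
Proof.
apply: (view_transfer (h := hL l)) => //.
- move=> [a|r] //; rewrite /closed_nbhd inr_inl_eq orFb => /(nbrL_NS l) rin.
  have [b [hb -> _]] := inrL l r rin; have [_ e2 e3] := HK2 b.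
  by rewrite e2 e3 hb /= HK1.
- have side : forall x, closed_nbhd (GE A (~: A')) (inl l) x ->
     (exists a, x = inl a) \/ (exists r, x = inr r /\ (inr r : GV A' (~: A')) \in NS A' (~: A')).
    move=> [a|r]; first by left; exists a.
    rewrite /closed_nbhd inr_inl_eq orFb => /(nbrL_NS l) rin; right; exists r; split => //.
  move=> x y /side [[a ->]|[r [-> rin]]] /side [[a' ->]|[r' [-> rin']]].
  + by rewrite /= (inl_edge_B A (~: A) (~: A')).
  + by rewrite /= edge_lr.
  + by rewrite sym_GE [in RHS]sym_GE /= edge_lr.
  + have [b [hb -> _]] := inrL l r rin; have [b' [hb' -> _]] := inrL l r' rin'.
    by rewrite (transport A A') hb hb' (inr_inr_A A' A).
- move=> [a|r0].
    rewrite /closed_nbhd inl_eqE => h; exists (inl a) => //.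
    by rewrite /closed_nbhd inl_eqE -(inl_edge_B A (~: A) (~: A')).
  rewrite /closed_nbhd inr_inl_eq orFb => e.
  have r0in : (inr r0 : GV A (~: A)) \in NS A (~: A).
    move: e; rewrite glue_inl_inr; last exact: injL.
    by case/existsP => i /andP [_ e]; apply: (@nbr_special_in_NS _ _ _ _ _ _ _ i).
  have [b hb] := surjA _ _ r0in; have [e1 _ _] := HK2 b.
  move: e1; rewrite hb; case E' : (phiA A' (val b)) => [//|r] _.
  have rin : (inr r : GV A' (~: A')) \in NS A' (~: A') by rewrite -E'; exact: inNS.
  have [b' [hb' hh _]] := inrL l r rin.
  have bb : b' = b by apply: (injA A'); rewrite hb' E'.
  exists (inr r); last by rewrite hh bb hb.
  by rewrite /closed_nbhd inr_inl_eq orFb -(edge_lr l l r rin) hh bb hb.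
Qed.

Definition hR (r : {r : VR (~: A') | r \notin codom (sR (~: A'))}) (x : GV A (~: A')) : GV A' (~: A') :=
  match x with
  | inl a => if [pick i | sL A i == a] is Some i then inl (sL A' i) else inr r
  | inr r' => inr r'
  end.

Lemma hR_sp r i : hR r (inl (sL A i)) = inl (sL A' i).
Proof.
rewrite /hR; case: pickP => [j /eqP /injL -> //|none].
by have := none i; rewrite eqxx.
Qed.

Lemma specdata i : gid A (~: A) (sp A (~: A) i) = gid A' (~: A') (sp A' (~: A') i) /\
                   cA A (sp A (~: A) i) = cA A' (sp A' (~: A') i).
Proof. by have [_ e2 e3] := HK2 (spb i); rewrite !spA in e2 e3. Qed.

Lemma viewR r : local_view (GE A (~: A')) (gid A (~: A')) cM (inr r)
              = local_view (GE A' (~: A')) (gid A' (~: A')) (cA A') (inr r).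
Proof.
have side : forall x, closed_nbhd (GE A (~: A')) (inr r) x ->
    (exists i, x = inl (sL A i)) \/ (exists r', x = inr r').
  move=> [a|r']; last by right; exists r'.
  rewrite /closed_nbhd inl_inr_eq orFb glue_rl => /existsP [i /andP [/eqP <- _]].
  by left; exists i.
apply: (view_transfer (h := hR r)) => //.
- move=> x /side [[i ->]|[r' ->]].
    rewrite hR_sp; have [e2 e3] := specdata i.
    by split; [exact: esym e2 | exact: esym e3].
  by rewrite /= HK1.
- move=> x y /side [[i ->]|[r1 ->]] /side [[j ->]|[r2 ->]]; rewrite ?hR_sp /=.
  + exact: (Hss A' (~: A') A (~: A') i j).
  + exact: (special_inr_A A' A (~: A') i r2).
  + by rewrite sym_GE [in RHS]sym_GE; exact: (special_inr_A A' A (~: A') j r1).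
  + exact: inr_inr_A.
- move=> [a'|r'].
    rewrite /closed_nbhd inl_inr_eq orFb => e; have := e.
    rewrite glue_rl => /existsP [i /andP [/eqP ai _]].
    exists (inl (sL A i)); last by rewrite hR_sp ai.
    rewrite /closed_nbhd inl_inr_eq orFb sym_GE.
    by rewrite (special_inr_A A A' _ i r) sym_GE /glue_special ai.
  rewrite /closed_nbhd inr_eqE => e; exists (inr r') => //.
  by rewrite /closed_nbhd inr_eqE (inr_inr_A A A').
Qed.

Lemma accept_M v : D (local_view (GE A (~: A')) (gid A (~: A')) cM v).
Proof.
case: v => [l|r]; [rewrite viewL; exact: (cA_spec A).2 | rewrite viewR; exact: (cA_spec A').2].
Qed.

End Mixed.

Section Key2.
Variables (W F : nat).
Hypothesis HW : forall A, #|GV A (~: A)| <= W.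
Hypothesis HF : forall A, f #|GV A (~: A)| <= F.

Lemma fool A A' : key W F A = key W F A' -> A :&: ~: A' = set0.
Proof.
move=> /(key_facts W F HW HF A A') [HK1 HK2]; apply/HC.
case: (classic (C _ (GE A (~: A')))) => // nC.
have [v Hv] := Hpls.2 _ _ _ (Hconn _ _) (gid_valid _ _) nC (cM A A').
by rewrite accept_M in Hv.
Qed.

Lemma key_inj : injective (key W F).
Proof.
move=> A A' e; apply/eqP; rewrite eqEsubset; apply/andP; split;
  rewrite subsets_disjoint -setI_eq0; apply/eqP; apply: fool => //.
Qed.

Lemma count_bound : expn 2 N <= #|{: 'I_W.+1 * {ffun bNS -> bool * 'I_W.+1 * {bseq F of bool}}}|.
Proof.
have := leq_card _ key_inj.
have -> : #|{: {set 'I_N}}| = expn 2 N.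
  by rewrite -cardsT -(@powersetT 'I_N) card_powerset cardsT card_ord.
by [].
Qed.
End Key2.

End Fool.

From mathcomp Require Import zify.
From Stdlib Require Import Lra.

Lemma INR_muln m n : INR (m * n) = (INR m * INR n)%R.
Proof. by rewrite -mult_INR. Qed.

Lemma INR_expn m n : INR (expn m n) = (INR m ^ n)%R.
Proof. elim: n => [|n IH]; first by rewrite expn0. by rewrite expnS INR_muln IH. Qed.

Lemma sum_pow2 F : \sum_(i < F.+1) expn 2 i <= expn 2 (F + F).
Proof.
apply: (@leq_trans (\sum_(i < F.+1) expn 2 F)).
  by apply: leq_sum => i _; apply: leq_pexp2l => //; rewrite -ltnS.
by rewrite sum_nat_const card_ord expnD leq_mul2r ltn_expl ?orbT.
Qed.

Lemma leq_expr m n e : m <= n -> expn m e <= expn n e.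
Proof. by move=> mn; elim: e => // e IH; rewrite !expnS leq_mul. Qed.

Lemma card_key_le (W F s w : nat) (T : finType) : #|T| <= s -> W.+1 = expn 2 w ->
  #|{: 'I_W.+1 * {ffun T -> bool * 'I_W.+1 * {bseq F of bool}}}| <= expn 2 (w + (1 + w + (F + F)) * s).
Proof.
move=> Ts Ww.
rewrite card_prod card_ord card_ffun !card_prod card_bool card_ord card_bseq card_bool Ww.
rewrite expnD leq_mul2l; apply/orP; right.
apply: (@leq_trans (expn (expn 2 (1 + w + (F + F))) #|T|)).
  apply: leq_expr.
  by rewrite !expnD expn1 leq_mul2l -expnD sum_pow2 orbT.
by rewrite -expnM leq_exp2l // leq_mul2l Ts orbT.
Qed.

Theorem theorem4p1 (idb : nat -> nat) (Hidb : forall n, n <= idb n)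
    (C : graph_class) (s : nat) (kappa : R) (Hkappa : (0 < kappa)%R) :
  disjointness_expressing s kappa C ->
  exists c : R, (0 < c)%R /\
    forall (f : nat -> nat) (D : verifier),
      proof_labeling_scheme idb C f D ->
      forall n0 : nat, exists n : nat, n0 <= n /\
        (c * Rpower (INR n) kappa / INR s <= INR (f n))%R.
Proof.
move=> [alpha [Ha HDE]].
have Hak : (0 < Rpower alpha kappa)%R by rewrite /Rpower; apply: exp_pos.
exists (/ (16 * Rpower alpha kappa))%R; split.
  by apply: Rinv_0_lt_compat; apply: Rmult_lt_0_compat => //; lra.
move=> f D Hpls n0.
apply: NNPP => Hno.
have Hlt : forall n, n0 <= n ->
    (INR (f n) < / (16 * Rpower alpha kappa) * Rpower (INR n) kappa / INR s)%R.
  by move=> n Hn; apply: Rnot_le_lt => H; apply: Hno; exists n; split.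
have s_pos : 0 < s.
  case: s Hlt {Hno HDE} => [|s'] // Hlt'.
  have := Hlt' n0 (leqnn _); rewrite /= /Rdiv Rinv_0 Rmult_0_r => H.
  by have := pos_INR (f n0); lra.
have [a Ha'] := INR_unbounded alpha.
have [p Hp] := INR_unbounded (/ kappa).
pose F0 := \max_(i < n0) f i.
pose m := 16 * p * (1 + s) + (8 * a * (1 + s) + 8 * s + 16 * s * F0) + 1.
pose t := m + m.
pose N := expn 2 t.
have N_pos : 0 < N by rewrite expn_gt0.
have [k [VL [VR [eL [eR [sL [sR [Hsimp [Hi [Hiso [Hs HC]]]]]]]]]]] := HDE N N_pos.
pose w := a + t * p.
pose W := (expn 2 w).-1.
pose F := (N + 16 * s * F0) %/ (16 * s).
have INRN : (1 <= INR N)%R.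
  by rewrite -/(INR 1); apply: le_INR; apply/leP.
have HW : forall A, #|glue_vertex (VL A) (sR (~: A))| <= W.
  move=> A; have [_ Hn] := Hi A (~: A).
  have H1 : (INR #|glue_vertex (VL A) (sR (~: A))| <= INR (a * expn N p))%R.
    apply: (Rle_trans _ _ _ Hn); rewrite INR_muln INR_expn.
    apply: Rmult_le_compat; [lra | | lra |].
      by rewrite /Rpower; apply: Rlt_le; apply: exp_pos.
    rewrite -Rpower_pow; last lra.
    by apply: Rle_Rpower => //; lra.
  have /leP H2 := INR_le _ _ H1.
  rewrite /W -ltnS prednK ?expn_gt0 //.
  apply: (leq_ltn_trans H2).
  rewrite /N -expnM /w expnD.
  by rewrite ltn_pmul2r ?expn_gt0 // ltn_expl.
have HF : forall A, f #|glue_vertex (VL A) (sR (~: A))| <= F.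
  move=> A; rewrite /F leq_divRL ?muln_gt0 ?s_pos //.
  set n := #|glue_vertex (VL A) (sR (~: A))|.
  case: (ltnP n n0) => Hn.
    have : f n <= F0 by exact: (@leq_bigmax _ (fun i : 'I_n0 => f i) (Ordinal Hn)).
    by move=> h; rewrite mulnC (leq_trans _ (leq_addl _ _)) // leq_mul2l h orbT.
  have H := Hlt n Hn.
  have [[_ [n_pos _]] HnR] := Hi A (~: A).
  have npos : (0 < INR n)%R by apply: lt_0_INR; apply/ltP.
  have Hpow : (Rpower (INR n) kappa <= Rpower alpha kappa * INR N)%R.
    apply: (Rle_trans _ (Rpower (alpha * Rpower (INR N) (/ kappa)) kappa)).
      by apply: Rle_Rpower_l; [exact: Rlt_le | split].
    rewrite -Rpower_mult_distr //; last by rewrite /Rpower; apply: exp_pos.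
    rewrite Rpower_mult Rinv_l; last lra.
    rewrite Rpower_1; lra.
  have spos : (0 < INR s)%R by apply: lt_0_INR; apply/ltP.
  have H' : (INR (f n) * (16 * INR s) < INR N)%R.
    have Hq : (/ (16 * Rpower alpha kappa) * Rpower (INR n) kappa / INR s <=
               INR N / (16 * INR s))%R.
      apply: (Rle_trans _ (/ (16 * Rpower alpha kappa) * (Rpower alpha kappa * INR N) / INR s)).
        rewrite /Rdiv; apply: Rmult_le_compat_r.
          by apply: Rlt_le; apply: Rinv_0_lt_compat.
        apply: Rmult_le_compat_l => //.
        by apply: Rlt_le; apply: Rinv_0_lt_compat; lra.
      right; field; lra.
    have := Rmult_lt_compat_r (16 * INR s) _ _ ltac:(lra) (Rlt_le_trans _ _ _ H Hq).
    by rewrite /Rdiv Rmult_assoc Rinv_l ?Rmult_1_r; lra.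
  have : (INR (f n * 16 * s) < INR N)%R.
    have e16 : INR 16 = 16%R by rewrite /=; lra.
    by rewrite !INR_muln e16; lra.
  move=> /INR_lt /ltP h.
  by rewrite mulnA; exact: leq_trans (ltnW h) (leq_addr _ _).
have key := count_bound C idb Hidb f D Hpls N k VL VR eL eR sL sR Hsimp (fun A B => (Hi A B).1) Hiso HC W F HW HF.
have Ww : W.+1 = expn 2 w by rewrite /W prednK // expn_gt0.
have H3 : expn 2 N <= expn 2 (w + (1 + w + (F + F)) * s).
  apply: (leq_trans key); apply: card_key_le Ww.
  rewrite card_sig; exact: Hs set0 set0.
rewrite leq_exp2l // in H3.
have H4 : F * (16 * s) <= N + 16 * s * F0 := leq_trunc_div _ _.
have Q1 : m < expn 2 m := ltn_expl _ (isT : 1 < 2).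
have eN : N = expn 2 m * expn 2 m by rewrite /N /t expnD.
have ew : w = a + (m + m) * p by [].
have em : m = 16 * p * (1 + s) + (8 * a * (1 + s) + 8 * s + 16 * s * F0) + 1 by [].
move: H3 H4 Q1 eN ew em.
clearbody F W w N t m F0.
move: (expn 2 m) => Q. nia.
Qed.
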